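(* Consider any sequences evolved by Algorithm 2 and let $d_0:=\|x^0-x^*\|$. Then for all $k\ge1$, $\sum_{j=1}^k\frac{A_j}{\lambda_j^{(p+1)/(p-1)}}\le\frac{d_0^2}{\theta^{2/(p-1)}(1-\sigma^2)}$. In particular (assuming $d_0>0$), for all $k\ge1$, $\lambda_k\ge C\,d_0^{-2(p-1)/(p+1)}$, where $C:=\lambda_1^{\frac{p-1}{p+1}}\theta^{\frac{2}{p+1}}(1-\sigma^2)^{\frac{p-1}{p+1}}$.
   Context: Setting: $\mathcal H$ is a finite-dimensional real inner product space with inner product $\langle\cdot,\cdot\rangle$ and norm $\|\cdot\|$. $f,g:\mathcal H\to(-\infty,\infty]$ are proper, closed, convex functions, $h:=f+g$ has nonempty domain, and $g$ is $\mu$-strongly convex for some $\mu>0$, i.e. $g(tx+(1-t)y)\le tg(x)+(1-t)g(y)-\frac{\mu}{2}t(1-t)\|x-y\|^2$ for all $x,y\in\mathcal H$, $t\in[0,1]$. $x^*$ denotes the unique minimizer of $h$. For $\varepsilon\ge 0$, $\partial_\varepsilon f(y):=\{u\in\mathcal H: f(w)\ge f(y)+\langle u,w-y\rangle-\varepsilon\ \forall w\in\mathcal H\}$, and $\partial g:=\partial_0 g$. Algorithm 2: Choose $x^0,y^0\in\mathcal H$, $\sigma\in[0,1)$, $p\ge2$ and $\theta>0$, and set $A_0=0$. For $k=0,1,2,\dots$: choose $\lambda_{k+1}>0$, set $a_{k+1}=\frac{(1+2\mu A_k)\lambda_{k+1}+\sqrt{(1+2\mu A_k)^2\lambda_{k+1}^2+4(1+\mu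 A_k)A_k\lambda_{k+1}}}{2}$ and $\tilde x^k=\frac{a_{k+1}-\mu A_k\lambda_{k+1}}{A_k+a_{k+1}}x^k+\frac{A_k+\mu A_k\lambda_{k+1}}{A_k+a_{k+1}}y^k$; compute $(y^{k+1},v^{k+1},\varepsilon_{k+1})\in\mathcal H\times\mathcal H\times[0,\infty)$ such that $v^{k+1}\in\partial_{\varepsilon_{k+1}}f(y^{k+1})+\partial g(y^{k+1})$, $\frac{\|\lambda_{k+1}v^{k+1}+y^{k+1}-\tilde x^k\|^2}{1+\lambda_{k+1}\mu}+2\lambda_{k+1}\varepsilon_{k+1}\le\sigma^2\|y^{k+1}-\tilde x^k\|^2$, and $\lambda_{k+1}\|y^{k+1}-\tilde x^k\|^{p-1}\ge\theta$; then set $A_{k+1}=A_k+a_{k+1}$ and $x^{k+1}=\frac{1+\mu A_k}{1+\mu A_{k+1}}x^k+\frac{\mu a_{k+1}}{1+\mu A_{k+1}}y^{k+1}-\frac{a_{k+1}}{1+\mu A_{k+1}}v^{k+1}$. ''Sequences evolved by Algorithm 2'' means any sequences satisfying all these relations for every $k\ge 0$. *)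

(* Defs.v *)
From HB Require Import structures.
From mathcomp Require Import all_boot all_order all_algebra.
From mathcomp Require Import all_classical all_reals all_analysis.
Set Implicit Arguments. Unset Strict Implicit. Unset Printing Implicit Defensive.
Import Order.TTheory GRing.Theory Num.Theory.
Import numFieldNormedType.Exports.
Local Open Scope ring_scope.
Local Open Scope ereal_scope.

(* The finite-dimensional real inner product space H is modelled as R^n
   (row vectors 'rV[R]_n) with the standard Euclidean inner product. *)

Definition ip (R : realType) (n : nat) (u w : 'rV[R]_n) : R :=
  (\sum_(i < n) u ord0 i * w ord0 i)%R.

Definition vnorm (R : realType) (n : nat) (u : 'rV[R]_n) : R :=
  Num.sqrt (ip u u).

Definition proper_fun (R : realType) (n : nat) (f : 'rV[R]_n -> \bar R) : Prop :=
  (forall x, f x != -oo) /\ (exists x, f x < +oo).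

Definition closed_fun (R : realType) (n : nat) (f : 'rV[R]_n -> \bar R) : Prop :=
  forall a : R, @closed 'rV[R]_n [set x | f x <= a%:E]%classic.

Definition convex_fun (R : realType) (n : nat) (f : 'rV[R]_n -> \bar R) : Prop :=
  forall (x y : 'rV[R]_n) (t : R), (0 <= t <= 1)%R ->
    f (t *: x + (1 - t) *: y)%R <= t%:E * f x + (1 - t)%:E * f y.

Definition strongly_convex_fun (R : realType) (n : nat) (mu : R)
    (g : 'rV[R]_n -> \bar R) : Prop :=
  forall (x y : 'rV[R]_n) (t : R), (0 <= t <= 1)%R ->
    g (t *: x + (1 - t) *: y)%R <=
      t%:E * g x + (1 - t)%:E * g y
      - (mu / 2 * t * (1 - t) * (vnorm (x - y)) ^+ 2)%:E.

Definition eps_subdiff (R : realType) (n : nat) (eps : R)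
    (f : 'rV[R]_n -> \bar R) (y u : 'rV[R]_n) : Prop :=
  forall w, f y + (ip u (w - y) - eps)%:E <= f w.

Definition subdiff (R : realType) (n : nat) (g : 'rV[R]_n -> \bar R)
    (y u : 'rV[R]_n) : Prop := eps_subdiff 0%R g y u.

Definition in_sum_subdiff (R : realType) (n : nat) (eps : R)
    (f g : 'rV[R]_n -> \bar R) (y v : 'rV[R]_n) : Prop :=
  exists u1 u2, v = (u1 + u2)%R /\ eps_subdiff eps f y u1 /\ subdiff g y u2.

Definition is_minimizer (R : realType) (n : nat) (h : 'rV[R]_n -> \bar R)
    (xs : 'rV[R]_n) : Prop := forall x, h xs <= h x.

Definition algorithm2 (R : realType) (n : nat) (f g : 'rV[R]_n -> \bar R)
    (mu sigma p theta : R)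
    (x y v xt : nat -> 'rV[R]_n) (eps lam a A : nat -> R) : Prop :=
  A 0%N = 0%R /\
  forall k : nat,
    (0 < lam k.+1)%R /\
        a k.+1 = (((1 + 2 * mu * A k) * lam k.+1
                  + Num.sqrt ((1 + 2 * mu * A k) ^+ 2 * lam k.+1 ^+ 2
                              + 4 * (1 + mu * A k) * A k * lam k.+1)) / 2)%R /\
        xt k = (((a k.+1 - mu * A k * lam k.+1) / (A k + a k.+1)) *: x k
                + ((A k + mu * A k * lam k.+1) / (A k + a k.+1)) *: y k)%R /\
        (0 <= eps k.+1)%R /\
        in_sum_subdiff (eps k.+1) f g (y k.+1) (v k.+1) /\
        ((vnorm (lam k.+1 *: v k.+1 + y k.+1 - xt k)) ^+ 2 / (1 + lam k.+1 * mu)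
           + 2 * lam k.+1 * eps k.+1
           <= sigma ^+ 2 * (vnorm (y k.+1 - xt k)) ^+ 2)%R /\
        (theta <= lam k.+1 * powR (vnorm (y k.+1 - xt k)) (p - 1))%R /\
        A k.+1 = (A k + a k.+1)%R /\
        x k.+1 = (((1 + mu * A k) / (1 + mu * A k.+1)) *: x k
                  + ((mu * a k.+1) / (1 + mu * A k.+1)) *: y k.+1
                  - (a k.+1 / (1 + mu * A k.+1)) *: v k.+1)%R.

(* Main.v *)
Require Import Defs.
From HB Require Import structures.
From mathcomp Require Import all_boot all_order all_algebra.
From mathcomp Require Import all_classical all_reals all_analysis.
From mathcomp Require Import ring lra.
Import Order.TTheory GRing.Theory Num.Theory.
Local Open Scope ring_scope.
Set Implicit Arguments.

Section IP.
Variables (R : realType) (n : nat).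
Implicit Types (u w z : 'rV[R]_n) (t : R).

Lemma ip_ge0 u : 0 <= ip u u.
Proof. by apply: sumr_ge0 => i _; rewrite -expr2 sqr_ge0. Qed.

Lemma vnorm_sq u : vnorm u ^+ 2 = ip u u.
Proof. by rewrite /vnorm sqr_sqrtr // ip_ge0. Qed.

Lemma vnorm_ge0 u : 0 <= vnorm u.
Proof. exact: sqrtr_ge0. Qed.

Lemma ipDl u w z : ip (u + w) z = ip u z + ip w z.
Proof. by rewrite /ip -big_split; apply: eq_bigr => i _; rewrite mxE mulrDl. Qed.

Lemma ipZr u w t : ip u (t *: w) = t * ip u w.
Proof. by rewrite /ip mulr_sumr; apply: eq_bigr => i _; rewrite mxE mulrCA. Qed.

Lemma key_id (mu A a lam : R) (x y yn v w : 'rV[R]_n) :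
  0 < mu -> 0 <= A -> 0 < a -> 0 < lam ->
  a ^+ 2 = lam * ((1 + mu * A) * (A + a) + mu * A * a) ->
  let Ap := A + a in let B := 1 + mu*A in let Bp := 1 + mu*Ap in
  let xt := ((a - mu*A*lam)/Ap) *: x + ((A + mu*A*lam)/Ap) *: y in
  let xn := (B/Bp) *: x + (mu*a/Bp) *: yn - (a/Bp) *: v in
  B/2 * ip (x-w) (x-w) - Bp/2 * ip (xn-w) (xn-w) - Ap/(2*lam) * ip (yn-xt) (yn-xt)
  + a * ip v (w-yn) + a*mu/2 * ip (w-yn) (w-yn) + A * ip v (y-yn) + A*mu/2 * ip (y-yn) (y-yn)
  + Ap/(2*lam*(1+lam*mu)) * ip (lam*:v+yn-xt) (lam*:v+yn-xt)
  = mu*A*a*B*(1+lam*mu)/(2*Ap*Bp) * ip (x-y) (x-y).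
Proof.
move=> mu0 A0 a0 l0 ha Ap B Bp xt xn.
have h1 : 0 < 1 + mu*A by have := mulr_ge0 (ltW mu0) A0; lra.
have h2 : 0 <= mu*A*a by apply: mulr_ge0 => //; [apply: mulr_ge0 => //; exact: ltW | exact: ltW].
have h3 : 0 < (1+mu*A)*(A+a) by apply: mulr_gt0 => //; lra.
have hD : (1+mu*A)*(A+a) + mu*A*a != 0 by apply: lt0r_neq0; lra.
have hl : lam = a^+2 / ((1+mu*A)*(A+a) + mu*A*a) by rewrite ha mulfK.
have h4 : 0 < a ^+ 2 * mu by apply: mulr_gt0 => //; apply: exprn_gt0.
have hAp : A + a != 0 by apply: lt0r_neq0; lra.
have hBp : 1 + mu * (A + a) != 0.
  apply: lt0r_neq0; have := mulr_ge0 (ltW mu0) (addr_ge0 A0 (ltW a0)); lra.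
rewrite /xt /xn /Bp /B /Ap {ha xt xn Bp B Ap}; subst lam.
rewrite /ip !mulr_sumr -!sumrN -!big_split /=.
apply: eq_bigr => i _; rewrite !mxE.
field.
rewrite hBp hAp hD (lt0r_neq0 a0) /=.
rewrite andbT; apply: lt0r_neq0; lra.
Qed.
End IP.
Local Open Scope ereal_scope.
Lemma subd_fin (R : realType) n (f : 'rV[R]_n -> \bar R) (eps : R) y u :
  proper_fun f -> eps_subdiff eps f y u -> f y \is a fin_num.
Proof.
move=> [hm [z hz]] hs; rewrite fin_numE hm /=.
apply/negP => /eqP hy; move: (hs z); rewrite hy addye //.
by rewrite leye_eq => /eqP hz'; rewrite hz' ltxx in hz.
Qed.
Local Close Scope ereal_scope.

Lemma sc_subgrad (R : realType) n (g : 'rV[R]_n -> \bar R) (mu : R) y u w :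
  proper_fun g -> 0 < mu -> strongly_convex_fun mu g -> subdiff g y u ->
  (g w < +oo)%E ->
  fine (g y) + ip u (w - y) + mu / 2 * ip (w - y) (w - y) <= fine (g w).
Proof.
move=> hp mu0 hsc hs hw.
have fy := subd_fin hp hs.
have fw : g w \is a fin_num by rewrite fin_numE hp.1 lt_eqF.
set Gy := fine (g y); set Gw := fine (g w); set N := ip (w - y) (w - y).
have gy : g y = Gy%:E by rewrite /Gy fineK.
have gw : g w = Gw%:E by rewrite /Gw fineK.
have key : forall t, 0 < t <= 1 ->
    Gy + ip u (w - y) + mu / 2 * (1 - t) * N <= Gw.
  move=> t /andP[t0 t1].
  have := hsc w y t; rewrite (ltW t0) t1 => /(_ isT).
  have := hs (t *: w + (1 - t) *: y).
  rewrite gy gw => h1 h2.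
  have := le_trans h1 h2.
  rewrite -!EFinM -EFinD -EFinB lee_fin vnorm_sq.
  have -> : t *: w + (1 - t) *: y - y = t *: (w - y).
    by apply/matrixP => i j; rewrite !mxE; ring.
  rewrite ipZr -/N => h.
  have hN : 0 <= N by exact: ip_ge0.
  have : t * (Gy + ip u (w - y) + mu / 2 * (1 - t) * N) <= t * Gw by lra.
  by rewrite ler_pM2l.
apply/ler_addgt0Pr => e e0.
have hN : 0 <= mu / 2 * N by apply: mulr_ge0; [lra | exact: ip_ge0].
pose t := e / (e + mu / 2 * N).
have hpos : 0 < e + mu / 2 * N by lra.
have tE : t * (e + mu / 2 * N) = e by rewrite /t mulfVK // lt0r_neq0.
have t0 : 0 < t by rewrite /t divr_gt0.
have t1 : t <= 1 by rewrite /t ler_pdivrMr // mul1r; lra.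
have := key t; rewrite t0 t1 => /(_ isT).
have : 0 <= t * e by apply: mulr_ge0; lra.
nra.
Qed.

Lemma sum_fin (R : realType) n (f g : 'rV[R]_n -> \bar R) (eps : R) y v :
  proper_fun f -> proper_fun g -> in_sum_subdiff eps f g y v ->
  f y \is a fin_num /\ g y \is a fin_num.
Proof.
move=> pf pg [u1 [u2 [_ [hf hg]]]]; split; [exact: subd_fin hf | exact: subd_fin hg].
Qed.

Lemma h_subgrad (R : realType) n (f g : 'rV[R]_n -> \bar R) (mu eps : R) yn v w :
  proper_fun f -> proper_fun g -> 0 < mu -> strongly_convex_fun mu g ->
  in_sum_subdiff eps f g yn v -> (f w < +oo)%E -> (g w < +oo)%E ->
  fine (f yn) + fine (g yn) + ip v (w - yn) - eps + mu / 2 * ip (w - yn) (w - yn)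
    <= fine (f w) + fine (g w).
Proof.
move=> pf pg mu0 sc [u1 [u2 [-> [hf hg]]]] fw gw.
have h2 := @sc_subgrad _ _ g mu yn u2 w pg mu0 sc hg gw.
have fy := subd_fin pf hf.
have fw' : f w \is a fin_num by rewrite fin_numE pf.1 lt_eqF.
have := hf w; rewrite -(fineK fy) -(fineK fw') -EFinD lee_fin => h1.
rewrite ipDl; lra.
Qed.

Lemma alg_facts (R : realType) n (f g : 'rV[R]_n -> \bar R) (mu sigma p theta : R)
    (x y v xt : nat -> 'rV[R]_n) (eps lam a A : nat -> R) :
  0 < mu -> algorithm2 f g mu sigma p theta x y v xt eps lam a A ->
  (forall k, 0 <= A k) /\ (forall k, 0 < a k.+1) /\
  (forall k, a k.+1 ^+ 2 = lam k.+1 * ((1 + mu * A k) * (A k + a k.+1) + mu * A k * a k.+1)).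
Proof.
move=> mu0 [A0 alg].
have pos : forall k, 0 <= A k -> 0 < a k.+1 /\
   a k.+1 ^+ 2 = lam k.+1 * ((1 + mu * A k) * (A k + a k.+1) + mu * A k * a k.+1).
  move=> k hA; have [hl [ha _]] := alg k.
  set b := 1 + 2 * mu * A k in ha.
  have hb : 0 < b by rewrite /b; have := mulr_ge0 (ltW mu0) hA; lra.
  set rad := b ^+ 2 * lam k.+1 ^+ 2 + 4 * (1 + mu * A k) * A k * lam k.+1 in ha.
  have hmA : 0 <= mu * A k by exact: mulr_ge0 (ltW mu0) hA.
  have hrad : 0 <= rad.
    apply: addr_ge0; first by apply: mulr_ge0; apply: sqr_ge0.
    apply: mulr_ge0 (ltW hl); apply: mulr_ge0 hA; lra.
  have hs := sqrtr_ge0 rad.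
  have hbl : 0 < b * lam k.+1 by exact: mulr_gt0.
  have hsq : Num.sqrt rad ^+ 2 = rad by rewrite sqr_sqrtr.
  split; first by rewrite ha; lra.
  have e : Num.sqrt rad = 2 * a k.+1 - b * lam k.+1 by rewrite ha; field.
  rewrite e /rad /b in hsq.
  apply/eqP; rewrite -subr_eq0; apply/eqP.
  have : 4 * (a k.+1 ^+ 2 - lam k.+1 * ((1 + mu * A k) * (A k + a k.+1) + mu * A k * a k.+1)) = 0.
    rewrite -[RHS](subrr ((2 * a k.+1 - (1 + 2 * mu * A k) * lam k.+1) ^+ 2)).
    rewrite {2}hsq; ring.
  by move/eqP; rewrite mulf_eq0 => /orP[/eqP h|/eqP //]; move: h; lra.
have hA : forall k, 0 <= A k.
  elim=> [|k ih]; first by rewrite A0.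
  have [_ [_ [_ [_ [_ [_ [_ [-> _]]]]]]]] := alg k.
  have [h _] := pos k ih; lra.
split=> //; split=> k; have [h1 h2] := pos k (hA k) => //.
Qed.

Unset Implicit Arguments.

Theorem lemma3p1 (R : realType) (n : nat) (f g : 'rV[R]_n -> \bar R)
    (mu sigma p theta : R) (xs : 'rV[R]_n)
    (x y v xt : nat -> 'rV[R]_n) (eps lam a A : nat -> R) :
  proper_fun f -> closed_fun f -> convex_fun f ->
  proper_fun g -> closed_fun g -> convex_fun g ->
  0 < mu -> strongly_convex_fun mu g ->
  (exists z, (f z + g z < +oo)%E) ->
  is_minimizer (fun z => (f z + g z)%E) xs ->
  0 <= sigma < 1 -> 2 <= p -> 0 < theta ->
  algorithm2 f g mu sigma p theta x y v xt eps lam a A ->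
  let d0 := vnorm (x 0%N - xs) in
  (forall k : nat, (1 <= k)%N ->
     \sum_(1 <= j < k.+1) A j / powR (lam j) ((p + 1) / (p - 1))
       <= d0 ^+ 2 / (powR theta (2 / (p - 1)) * (1 - sigma ^+ 2))) /\
  (0 < d0 ->
     let C := powR (lam 1%N) ((p - 1) / (p + 1)) * powR theta (2 / (p + 1))
              * powR (1 - sigma ^+ 2) ((p - 1) / (p + 1)) in
     forall k : nat, (1 <= k)%N ->
       C * powR d0 (- (2 * (p - 1) / (p + 1))) <= lam k).
Proof.
move=> pf _ _ pg _ _ mu0 sc _ hmin /andP[s0 s1] p2 th0 alg d0.
have [hA [hapos harel]] := alg_facts mu0 alg.
have [A0 algk] := alg.
have fin k : f (y k.+1) \is a fin_num /\ g (y k.+1) \is a fin_num.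
  by have [_ [_ [_ [_ [hs _]]]]] := algk k; exact: sum_fin pf pg hs.
have fxs : f xs \is a fin_num /\ g xs \is a fin_num.
  have := hmin (y 1%N); have [h1 h2] := fin 0%N.
  rewrite -(fineK h1) -(fineK h2) -EFinD /=.
  rewrite !fin_numE (pf.1 xs) (pg.1 xs) /=.
  case: (f xs) (pf.1 xs) => [r| |] //; case: (g xs) (pg.1 xs) => [s| |] //.
have ltoo (e : \bar R) : e \is a fin_num -> (e < +oo)%E.
  by rewrite fin_numE => /andP[_ h]; rewrite ltey.
pose Hr z := fine (f z) + fine (g z).
have hopt k : Hr xs <= Hr (y k.+1).
  have := hmin (y k.+1); have [h1 h2] := fin k; have [h3 h4] := fxs.
  by rewrite -(fineK h1) -(fineK h2) -(fineK h3) -(fineK h4) -!EFinD lee_fin.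
pose P k := A k * (Hr (y k) - Hr xs) + (1 + mu * A k) / 2 * ip (x k - xs) (x k - xs).
pose T j := (1 - sigma ^+ 2) * A j / (2 * lam j) * ip (y j - xt j.-1) (y j - xt j.-1).
have step k : P k.+1 + T k.+1 <= P k.
  have [hl [ha [hxt [he [hs [hhpe [hth [hAk hx]]]]]]]] := algk k.
  have D1 := @h_subgrad _ _ f g mu (eps k.+1) (y k.+1) (v k.+1) xs pf pg mu0 sc hs (ltoo _ fxs.1) (ltoo _ fxs.2).
  have D2 : A k * (Hr (y k.+1) + ip (v k.+1) (y k - y k.+1) - eps k.+1
       + mu / 2 * ip (y k - y k.+1) (y k - y k.+1)) <= A k * Hr (y k).
    have [->|kpos] := eqVneq k 0%N; first by rewrite A0 !mul0r.
    have [k' ek] : exists k', k = k'.+1 by exists k.-1; rewrite prednK // lt0n.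
    have -> : y k = y k'.+1 by rewrite ek.
    apply: ler_wpM2l; first exact: hA.
    exact: (@h_subgrad _ _ f g mu (eps k.+1) (y k.+1) (v k.+1) (y k'.+1) pf pg mu0 sc hs (ltoo _ (fin k').1) (ltoo _ (fin k').2)).
  rewrite !vnorm_sq in hhpe.
  have KI := @key_id R n mu (A k) (a k.+1) (lam k.+1) (x k) (y k) (y k.+1) (v k.+1) xs mu0 (hA k) (hapos k) hl (harel k).
  cbv zeta in KI.
  rewrite /P /T /= hx hAk hxt.
  rewrite hxt in hhpe.
  set Nh := ip _ _ in hhpe KI *.
  set Nt := ip (y k.+1 - _) _ in hhpe KI *.
  set Nx := ip (x k - y k) _ in KI.
  have lmu : 0 < 1 + lam k.+1 * mu by have := mulr_gt0 hl mu0; lra.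
  have Ap0 : 0 < A k + a k.+1 by have := hA k; have := hapos k; lra.
  have D3 : (A k + a k.+1) / (2 * lam k.+1 * (1 + lam k.+1 * mu)) * Nh
      + (A k + a k.+1) * eps k.+1 <= (A k + a k.+1) / (2 * lam k.+1) * (sigma ^+ 2 * Nt).
    have c : 0 <= (A k + a k.+1) / (2 * lam k.+1) by apply: divr_ge0; lra.
    have := ler_wpM2l c hhpe.
    have -> : (A k + a k.+1) / (2 * lam k.+1) * (Nh / (1 + lam k.+1 * mu)
      + 2 * lam k.+1 * eps k.+1) = (A k + a k.+1) / (2 * lam k.+1 * (1 + lam k.+1 * mu)) * Nh
      + (A k + a k.+1) * eps k.+1.
      field; rewrite (lt0r_neq0 lmu) (lt0r_neq0 hl) //.
    by [].
  have c0 : 0 <= mu * A k * a k.+1 * (1 + mu * A k) * (1 + lam k.+1 * mu) /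
    (2 * (A k + a k.+1) * (1 + mu * (A k + a k.+1))) * Nx.
    apply: mulr_ge0; last exact: ip_ge0.
    have := hA k; have := hapos k => ha0 hA0.
    apply: divr_ge0; last by apply: mulr_ge0; [lra | have := mulr_ge0 (ltW mu0) (ltW Ap0); lra].
    repeat apply: mulr_ge0; try lra; have := mulr_ge0 (ltW mu0) hA0; lra.
  rewrite /Hr in D2 *.
  have hAa : 0 <= a k.+1 by exact: ltW.
  have := ler_wpM2l hAa D1.
  lra.
have Pge0 k : 0 <= P k.
  rewrite /P; apply: addr_ge0.
    case: k => [|k]; first by rewrite A0 mul0r.
    by apply: mulr_ge0; [exact: hA | have := hopt k; lra].
  apply: mulr_ge0; last exact: ip_ge0.
  have := mulr_ge0 (ltW mu0) (hA k); lra.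
have tele k : P k + \sum_(1 <= j < k.+1) T j <= P 0%N.
  elim: k => [|k ih]; first by rewrite big_geq // addr0.
  rewrite big_nat_recr //=; have := step k; lra.
have P0 : P 0%N = d0 ^+ 2 / 2.
  by rewrite /P A0 mul0r add0r mulr0 addr0 vnorm_sq mulrC div1r mulrC.
have Tsum k : \sum_(1 <= j < k.+1) T j <= d0 ^+ 2 / 2.
  by rewrite -P0; have := tele k; have := Pge0 k; lra.
have p1 : 0 < p - 1 by lra.
have s2 : 0 < 1 - sigma ^+ 2.
  have : sigma ^+ 2 < 1 by rewrite expr2; nra.
  lra.
have r0 : 0 <= 2 / (p - 1) by apply: divr_ge0; lra.
have thr : 0 < powR theta (2 / (p - 1)) by exact: powR_gt0.
have term j : A j.+1 / powR (lam j.+1) ((p + 1) / (p - 1))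
    <= 2 / ((1 - sigma ^+ 2) * powR theta (2 / (p - 1))) * T j.+1.
  have [hl [_ [_ [_ [_ [_ [hth _]]]]]]] := algk j.
  rewrite /T /= -vnorm_sq.
  set s := vnorm (y j.+1 - xt j) in hth *.
  set r := 2 / (p - 1) in r0 thr *.
  set l := lam j.+1 in hl hth *.
  have sn0 : 0 <= s by exact: vnorm_ge0.
  have hq : powR l ((p + 1) / (p - 1)) = l * powR l r.
    rewrite (_ : (p + 1) / (p - 1) = 1 + r); last first.
      by rewrite /r; field; apply: lt0r_neq0.
    by rewrite powRD ?powRr1 ?(lt0r_neq0 hl) ?implybT //; exact: ltW.
  have ht : powR theta r <= powR l r * s ^+ 2.
    have tl : theta / l <= powR s (p - 1) by rewrite ler_pdivrMr // mulrC.
    have := @ge0_ler_powR R r r0 (theta / l) (powR s (p - 1)).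
    rewrite !nnegrE powR_ge0 divr_ge0 ?(ltW th0) ?(ltW hl) // => /(_ isT isT tl).
    rewrite -powRrM (_ : (p - 1) * r = 2%:R); last first.
      by rewrite /r; field; apply: lt0r_neq0.
    rewrite powR_mulrn // => h.
    rewrite (_ : theta = l * (theta / l)); last by field; apply: lt0r_neq0.
    rewrite powRM ?(ltW hl) ?divr_ge0 ?(ltW th0) ?(ltW hl) //.
    apply: ler_wpM2l h; exact: powR_ge0.
  have lr : 0 < powR l r by exact: powR_gt0.
  rewrite hq.
  have hA1 := hA j.+1.
  rewrite (_ : A j.+1 / (l * powR l r) = A j.+1 / (l * powR theta r) * (powR theta r / powR l r));
    last by field; rewrite !lt0r_neq0.
  rewrite (_ : 2 / ((1 - sigma ^+ 2) * powR theta r) * ((1 - sigma ^+ 2) * A j.+1 / (2 * l) * s ^+ 2)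
     = A j.+1 / (l * powR theta r) * s ^+ 2); last by field; rewrite !lt0r_neq0.
  apply: ler_wpM2l; first by apply: divr_ge0 => //; apply: mulr_ge0; exact: ltW.
  by rewrite ler_pdivrMr // mulrC.
have part1 : forall k : nat, (1 <= k)%N ->
     \sum_(1 <= j < k.+1) A j / powR (lam j) ((p + 1) / (p - 1))
       <= d0 ^+ 2 / (powR theta (2 / (p - 1)) * (1 - sigma ^+ 2)).
  move=> k _.
  set K := 2 / ((1 - sigma ^+ 2) * powR theta (2 / (p - 1))).
  have K0 : 0 <= K by apply: divr_ge0 => //; apply: mulr_ge0; exact: ltW.
  apply: (le_trans (@ler_sum_nat R 1 k.+1 _ (fun j => K * T j) _)).
    by move=> j /andP[j1 _]; case: j j1 => // j _; exact: term j.
  rewrite -mulr_sumr; apply: le_trans (ler_wpM2l K0 (Tsum k)) _.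
  rewrite le_eqVlt; apply/orP; left; apply/eqP.
  by rewrite /K; field; rewrite !lt0r_neq0.
split=> //.
move=> dpos C k k1.
set q := (p + 1) / (p - 1).
set r := 2 / (p - 1) in r0 thr part1 term.
set iq := (p - 1) / (p + 1).
have iq0 : 0 <= iq by rewrite /iq; apply: divr_ge0; lra.
have A1 : A 1%N = lam 1%N.
  have [hl [_ [_ [_ [_ [_ [_ [hA1 _]]]]]]]] := algk 0%N.
  have := harel 0%N; rewrite hA1 A0 !(mulr0, add0r, mul0r, addr0, mul1r) => e.
  have a0 := hapos 0%N.
  by apply: (mulIf (lt0r_neq0 a0)); rewrite -expr2 e.
have Amono : forall k, A 1%N <= A k.+1.
  elim=> [//|m ih]; have [_ [_ [_ [_ [_ [_ [_ [-> _]]]]]]]] := algk m.+1.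
  have := hapos m.+1; lra.
case: k k1 => // k _.
have lk : 0 < lam k.+1 by have [] := algk k.
have lq : 0 < powR (lam k.+1) q by exact: powR_gt0.
have tk : A k.+1 / powR (lam k.+1) q <= d0 ^+ 2 / (powR theta r * (1 - sigma ^+ 2)).
  apply: le_trans (part1 k.+1 isT).
  rewrite big_nat_recr //= lerDr; apply: sumr_ge0 => j _.
  by apply: divr_ge0; [exact: hA | exact: powR_ge0].
have l1 : lam 1%N / powR (lam k.+1) q <= d0 ^+ 2 / (powR theta r * (1 - sigma ^+ 2)).
  apply: le_trans tk; apply: ler_wpM2r; first by rewrite invr_ge0 ltW.
  by rewrite -A1; exact: Amono.
have d2 : 0 < d0 ^+ 2 by exact: exprn_gt0.
have hk : lam 1%N * powR theta r * (1 - sigma ^+ 2) * (d0 ^+ 2)^-1 <= powR (lam k.+1) q.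
  move: l1; rewrite ler_pdivrMr // => l1.
  have c0 : 0 <= powR theta r * (1 - sigma ^+ 2) * (d0 ^+ 2)^-1.
    by apply: mulr_ge0; [apply: mulr_ge0; exact: ltW | rewrite invr_ge0 ltW].
  have := ler_wpM2r c0 l1.
  rewrite (_ : d0 ^+ 2 / (powR theta r * (1 - sigma ^+ 2)) * powR (lam k.+1) q *
     (powR theta r * (1 - sigma ^+ 2) * (d0 ^+ 2)^-1) = powR (lam k.+1) q);
    last by field; rewrite !lt0r_neq0.
  by rewrite !mulrA.
have l10 : 0 <= lam 1%N by have [] := algk 0%N; move=> h _; exact: ltW.
have n2 : 0 <= powR theta r by exact: powR_ge0.
have n3 : 0 <= 1 - sigma ^+ 2 by exact: ltW.
have n4 : 0 <= (d0 ^+ 2)^-1 by rewrite invr_ge0 ltW.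
have n12 : 0 <= lam 1%N * powR theta r by exact: mulr_ge0.
have n123 : 0 <= lam 1%N * powR theta r * (1 - sigma ^+ 2) by exact: mulr_ge0.
have := @ge0_ler_powR R iq iq0 _ _ _ _ hk.
rewrite !nnegrE powR_ge0 => /(_ (mulr_ge0 n123 n4) isT).
rewrite -powRrM (_ : q * iq = 1); last first.
  by rewrite /q /iq; field; apply/andP; split; apply: lt0r_neq0; lra.
rewrite powRr1; last exact: ltW.
rewrite !powRM // -powRrM.
have d00 : 0 <= d0 by exact: ltW.
rewrite -(powR_invn 2 d00) -powRrM.
rewrite (_ : r * iq = 2 / (p + 1)); last first.
  by rewrite /r /iq; field; apply/andP; split; apply: lt0r_neq0; lra.
rewrite (_ : - 2%:R * iq = - (2 * (p - 1) / (p + 1))); last by rewrite /iq; ring.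
by [].
Qed.
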